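(* Fix $p^s\in\mathbb{R}$ and let $$\mathcal{E}=\{(z,p^d,p^c)\in\mathbb{R}^3:\ p^d\ge0,\ p^c\ge0,\ p^dp^c=0,\ z\ge(p^d)^2+(p^c)^2-2p^dp^s+2p^cp^s+(p^s)^2\}.$$ Then $$\mathrm{conv}(\mathcal{E})=\{(z,p^d,p^c)\in\mathbb{R}^3:\ p^d\ge0,\ p^c\ge0,\ z\ge(p^d+p^c)^2-2p^dp^s+2p^cp^s+(p^s)^2\}.$$ Equivalently, writing $x=(p^d,p^c,z)^\top$, $A=\begin{pmatrix}1&1&0\\0&0&0\\0&0&0\end{pmatrix}$, $b=(-2p^s,\,2p^s,\,-1)^\top$, $c=(p^s)^2$, the convex hull is the set of $(z,p^d,p^c)$ with $p^d,p^c\ge0$ and the second-order cone constraint $$\left\|\begin{pmatrix}\tfrac12 b^\top x+\tfrac{1+c}{2}\\ Ax\end{pmatrix}\right\|_2\le\tfrac12\left(1-b^\top x-c\right).$$ *)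

(* Defs.v *)
From mathcomp Require Import all_boot all_order all_algebra.
From mathcomp Require Import reals.
Set Implicit Arguments. Unset Strict Implicit. Unset Printing Implicit Defensive.
Import Order.TTheory GRing.Theory Num.Theory.
Local Open Scope ring_scope.

(* Points of R^3 are written as triples (z, pd, pc). *)
Definition pt (R : realType) := (R * R * R)%type.

Definition conv (R : realType) (S : pt R -> Prop) : pt R -> Prop :=
  fun x => exists (n : nat) (w : 'I_n -> R) (q : 'I_n -> pt R),
    [/\ (forall i, 0 <= w i), \sum_(i < n) w i = 1, (forall i, S (q i)) &
        x = (\sum_(i < n) w i * (q i).1.1,
             \sum_(i < n) w i * (q i).1.2,
             \sum_(i < n) w i * (q i).2)].

Definition Eset (R : realType) (ps : R) : pt R -> Prop :=
  fun x => let: (z, pd, pc) := x in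
    [/\ 0 <= pd, 0 <= pc, pd * pc = 0 &
        pd ^+ 2 + pc ^+ 2 - 2 * pd * ps + 2 * pc * ps + ps ^+ 2 <= z].

Definition Hset (R : realType) (ps : R) : pt R -> Prop :=
  fun x => let: (z, pd, pc) := x in
    [/\ 0 <= pd, 0 <= pc &
        (pd + pc) ^+ 2 - 2 * pd * ps + 2 * pc * ps + ps ^+ 2 <= z].

Definition SOCset (R : realType) (ps : R) : pt R -> Prop :=
  fun x => let: (z, pd, pc) := x in
    let bx := - 2 * ps * pd + 2 * ps * pc - z in
    let c := ps ^+ 2 in
    let Ax := [:: pd + pc; 0; 0] in
    [/\ 0 <= pd, 0 <= pc &
        Num.sqrt ((bx / 2 + (1 + c) / 2) ^+ 2 + \sum_(a <- Ax) a ^+ 2)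
          <= (1 - bx - c) / 2].

(* Main.v *)
Require Import Defs.
From mathcomp Require Import all_boot all_order all_algebra.
From mathcomp Require Import reals.
From mathcomp Require Import ring lra.
Import Order.TTheory GRing.Theory Num.Theory.
Local Open Scope ring_scope.

Lemma jensen_sq (R : realType) n (w g : 'I_n -> R) :
  (forall i, 0 <= w i) -> \sum_(i < n) w i = 1 ->
  (\sum_(i < n) w i * g i) ^+ 2 <= \sum_(i < n) w i * g i ^+ 2.
Proof.
move=> w0 w1; set m := \sum_(i < n) w i * g i.
have hm : \sum_(i < n) w i * g i = m by [].
clearbody m.
have h : 0 <= \sum_(i < n) w i * (g i - m) ^+ 2.
  by apply: sumr_ge0 => i _; apply: mulr_ge0 => //; rewrite sqr_ge0.
have e : \sum_(i < n) w i * (g i - m) ^+ 2 =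
   \sum_(i < n) w i * g i ^+ 2 + (- (2 * m)) * \sum_(i < n) w i * g i
   + m ^+ 2 * \sum_(i < n) w i.
  rewrite !mulr_sumr -!big_split /=; apply: eq_bigr => i _; ring.
rewrite e w1 hm in h; lra.
Qed.

Lemma H_conv (R : realType) (ps : R) x : conv (Eset ps) x -> Hset ps x.
Proof.
case=> n [w [q [w0 w1 qE ->]]] /=.
set a := fun i => (q i).1.2; set b := fun i => (q i).2; set z := fun i => (q i).1.1.
have ha : forall i, 0 <= a i by move=> i; move: (qE i); rewrite /a; case: (q i) => [[? ?] ?] [].
have hb : forall i, 0 <= b i by move=> i; move: (qE i); rewrite /b; case: (q i) => [[? ?] ?] [].
have hz : forall i, (a i + b i) ^+ 2 - 2 * a i * ps + 2 * b i * ps + ps ^+ 2 <= z i.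
  move=> i; move: (qE i); rewrite /a /b /z; case: (q i) => [[zz aa] bb] [_ _ hab hzz] /=.
  move: hzz; rewrite sqrrD hab; lra.
rewrite /Hset; split; first by apply: sumr_ge0 => i _; apply: mulr_ge0; [exact: w0 | first [exact: ha | exact: hb]].
  by apply: sumr_ge0 => i _; apply: mulr_ge0; [exact: w0 | first [exact: ha | exact: hb]].
have J := @jensen_sq R n w (fun i => a i + b i) w0 w1.
have Zle : \sum_(i < n) w i * ((a i + b i) ^+ 2 - 2 * a i * ps + 2 * b i * ps + ps ^+ 2)
          <= \sum_(i < n) w i * z i.
  by apply: ler_sum => i _; apply: ler_wpM2l.
have e1 : \sum_(i < n) w i * ((a i + b i) ^+ 2 - 2 * a i * ps + 2 * b i * ps + ps ^+ 2)
   = \sum_(i < n) w i * (a i + b i) ^+ 2 + (- (2 * ps)) * \sum_(i < n) w i * a i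
     + (2 * ps) * \sum_(i < n) w i * b i + ps ^+ 2 * \sum_(i < n) w i.
  rewrite !mulr_sumr -!big_split /=; apply: eq_bigr => i _; ring.
have e2 : \sum_(i < n) w i * (a i + b i) = \sum_(i < n) w i * a i + \sum_(i < n) w i * b i.
  rewrite -big_split /=; apply: eq_bigr => i _; ring.
rewrite e1 w1 e2 in Zle J.
move: Zle J; rewrite /a /b /z /=; lra.
Qed.

Lemma conv_H (R : realType) (ps : R) x : Hset ps x -> conv (Eset ps) x.
Proof.
case: x => [[z pd] pc] [hd hc hz].
have [s0|spos] := eqVneq (pd + pc) 0.
  have d0 : pd = 0 by lra.
  have c0 : pc = 0 by lra.
  exists 1%N, (fun _ => 1), (fun _ => (z, pd, pc)); split => //.
  - by rewrite big_ord1.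
  - by move=> i; rewrite /Eset; split => //; [rewrite d0 mul0r | move: hz; rewrite d0 c0; lra].
  - by rewrite !big_ord1 !mul1r.
set s := pd + pc.
set dl := z - ((pd + pc) ^+ 2 - 2 * pd * ps + 2 * pc * ps + ps ^+ 2).
have sp : 0 < s by rewrite /s; rewrite lt_neqAle eq_sym spos addr_ge0.
exists 2%N, (fun i : 'I_2 => if val i == 0%N then pd / s else pc / s),
  (fun i : 'I_2 => if val i == 0%N then (s ^+ 2 - 2 * s * ps + ps ^+ 2 + dl, s, 0)
                   else (s ^+ 2 + 2 * s * ps + ps ^+ 2 + dl, 0, s)); split.
- by case=> [[|k] /= _]; apply: divr_ge0 => //; apply: ltW.
- rewrite !big_ord_recl big_ord0 /= /s; field; exact: spos.
- case=> [[|k] /= _]; rewrite /Eset; split; rewrite ?mulr0 ?mul0r //; try exact: ltW;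
    rewrite /dl; lra.
- rewrite !big_ord_recl !big_ord0 /=; congr (_, _, _); rewrite /dl /s; field; exact: spos.
Qed.

Lemma H_SOC (R : realType) (ps : R) x : Hset ps x <-> SOCset ps x.
Proof.
case: x => [[z pd] pc]; rewrite /Hset /SOCset !big_cons big_nil /=.
set bx := - 2 * ps * pd + 2 * ps * pc - z.
set u := bx / 2 + (1 + ps ^+ 2) / 2.
set v := (1 - bx - ps ^+ 2) / 2.
have key : v ^+ 2 - u ^+ 2 = - bx - ps ^+ 2 by rewrite /u /v; field.
have ev : v = 1/2 + (- bx - ps ^+ 2) / 2 by rewrite /v; field.
have hf : (- bx - ps ^+ 2) = z + 2 * pd * ps - 2 * pc * ps - ps ^+ 2 by rewrite /bx; ring.
split=> -[hd hc hz]; split => //.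
- have hq : 0 <= - bx - ps ^+ 2 - (pd + pc) ^+ 2 by rewrite hf; lra.
  have v0 : 0 <= v by rewrite ev; nra.
  rewrite -(ger0_norm v0) -sqrtr_sqr; apply: ler_wsqrtr.
  rewrite expr0n /= !addr0; lra.
- have v0 : 0 <= v by apply: le_trans hz; exact: sqrtr_ge0.
  have := hz; rewrite -(ger0_norm v0) -sqrtr_sqr.
  rewrite ler_sqrt ?sqr_ge0 // expr0n /= !addr0 => hle.
  lra.

Qed.

Theorem theorem2 (R : realType) (ps : R) :
  (forall x : pt R, conv (Eset ps) x <-> Hset ps x) /\
  (forall x : pt R, conv (Eset ps) x <-> SOCset ps x).
Proof.
have h1 : forall x : pt R, conv (Eset ps) x <-> Hset ps x.
  by move=> x; split; [exact: H_conv | exact: conv_H].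
split => // x; rewrite -H_SOC; exact: h1.
Qed.
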